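(* Let $n\geq 1$ and consider $2n$ qubits labeled $(-,i)$ and $(+,j)$ for $i,j\in\{1,\dots,n\}$, with Hilbert space $\mathcal{H}=(\mathbb{C}^2)^{\otimes 2n}$. For $i,j\in\{1,\dots,n\}$ let $|\psi_1\rangle^{ij}=\tfrac{1}{\sqrt2}(|00\rangle+|11\rangle)$, $|\psi_2\rangle^{ij}=\tfrac{1}{\sqrt2}(|01\rangle+|10\rangle)$, $|\psi_3\rangle^{ij}=\tfrac{1}{\sqrt2}(|00\rangle-|11\rangle)$, $|\psi_4\rangle^{ij}=\tfrac{1}{\sqrt2}(|01\rangle-|10\rangle)$, where the two tensor factors are the qubits $(-,i)$ and $(+,j)$, and let $E^{ij}_a=|\psi_a\rangle\langle\psi_a|^{ij}$ (acting as the identity on all other qubits), $a=1,\dots,4$. Then the algebra $\mathcal{D}$ generated by $\{E^{ij}_a : i,j=1,\dots,n;\ a=1,\dots,4\}$ contains no non-trivial local operator, i.e.\ no operator acting non-trivially on only a single qubit $(-,i)$ or $(+,j)$ (an operator of the form $A$ on that qubit tensored with the identity elsewhere, with $A$ not a multiple of the identity). *)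

(* Defs.v *)
(* Operators on (C^2)^{⊗2n} as square matrices over algC,
   indexed by the computational basis = functions from qubits to bool. *)
From HB Require Import structures.
From mathcomp Require Import all_boot all_order all_algebra all_field.
Set Implicit Arguments. Unset Strict Implicit. Unset Printing Implicit Defensive.
Import Order.TTheory GRing.Theory Num.Theory.
Local Open Scope ring_scope.

(* qubits: (false, i) is qubit (-,i); (true, j) is qubit (+,j) *)
Definition qubit (n : nat) := (bool * 'I_n)%type.
Definition basis (n : nat) := {ffun qubit n -> bool}.

Definition op (n : nat) := 'M[algC]_(#|{: basis n}|).

Definition mxop (n : nat) (f : basis n -> basis n -> algC) : op n :=
  \matrix_(i, j) f (enum_val i) (enum_val j).

Definition b2o (b : bool) : 'I_2 := inord (nat_of_bool b).

Definition agree_off (n : nat) (P : pred (qubit n)) (s t : basis n) : bool :=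
  [forall q, ~~ P q ==> (s q == t q)].

Definition local (n : nat) (q : qubit n) (A : 'M[algC]_2) : op n :=
  mxop (fun s t => A (b2o (s q)) (b2o (t q)) *
                   (agree_off (pred1 q) s t)%:R).

(* unnormalised Bell vectors (times sqrt 2), on two bits (x,y) where
   x = qubit (-,i) and y = qubit (+,j); a = 0,1,2,3 stands for psi_1..psi_4 *)
Definition bell (a : 'I_4) (x y : bool) : algC :=
  match val a with
  | 0 => (x == y)%:R
  | 1 => (x != y)%:R
  | 2 => if x == y then (if x then -1 else 1) else 0
  | _ => if x != y then (if x then -1 else 1) else 0
  end.

Definition Eproj (n : nat) (i j : 'I_n) (a : 'I_4) : op n :=
  mxop (fun s t =>
    bell a (s (false, i)) (s (true, j)) * (bell a (t (false, i)) (t (true, j)))^*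
      / 2%:R *
    (agree_off (fun q => (q == (false, i)) || (q == (true, j))) s t)%:R).

Inductive gen_alg (n : nat) (G : op n -> Prop) : op n -> Prop :=
  | ga_gen M : G M -> gen_alg G M
  | ga_one : gen_alg G 1%:M
  | ga_add M N : gen_alg G M -> gen_alg G N -> gen_alg G (M + N)
  | ga_scale (c : algC) M : gen_alg G M -> gen_alg G (c *: M)
  | ga_mul M N : gen_alg G M -> gen_alg G N -> gen_alg G (M *m N).

Definition Dalg (n : nat) : op n -> Prop :=
  gen_alg (fun M => exists (i j : 'I_n) (a : 'I_4), M = Eproj i j a).

(* Main.v *)
Require Import Defs.
From mathcomp Require Import all_boot all_order all_algebra all_field.
Set Implicit Arguments. Unset Strict Implicit. Unset Printing Implicit Defensive.
Import Order.TTheory GRing.Theory Num.Theory.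
Local Open Scope ring_scope.

Section S.
Variable n : nat.
Implicit Types (s t u : basis n).

Lemma mxop_mul (f g : basis n -> basis n -> algC) :
  mxop f *m mxop g = mxop (fun s u => \sum_t f s t * g t u).
Proof.
apply/matrixP=> i k; rewrite !mxE.
rewrite (big_enum_val (A := predT) (fun t => f (enum_val i) t * g t (enum_val k))).
by apply: eq_bigr => j _; rewrite !mxE.
Qed.

Lemma mxop_ext (f g : basis n -> basis n -> algC) :
  (forall s u, f s u = g s u) -> mxop f = mxop g.
Proof. by move=> H; apply/matrixP=> i k; rewrite !mxE H. Qed.

Lemma mxop_inj (f g : basis n -> basis n -> algC) :
  mxop f = mxop g -> forall s u, f s u = g s u.
Proof.
move=> /matrixP H s u; have := H (enum_rank s) (enum_rank u).
by rewrite !mxE !enum_rankK.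
Qed.

Definition flip s : basis n := [ffun q => ~~ s q].
Lemma flipK : involutive flip.
Proof. by move=> s; apply/ffunP=> q; rewrite !ffunE negbK. Qed.

Definition Xm : op n := mxop (fun s t => (t == flip s)%:R).
Definition sg (b : bool) : algC := if b then -1 else 1.
Definition dd s : algC := \prod_q sg (s q).
Definition Zm : op n := mxop (fun s t => (s == t)%:R * dd s).

Lemma sum_pickr (F : basis n -> algC) c : \sum_t F t * (t == c)%:R = F c.
Proof.
rewrite (bigD1 c) //= eqxx mulr1 big1 ?addr0 // => t /negbTE ->; by rewrite mulr0.
Qed.
Lemma sum_pickl (F : basis n -> algC) c : \sum_t (c == t)%:R * F t = F c.
Proof.
rewrite (bigD1 c) //= eqxx mul1r big1 ?addr0 // => t; rewrite eq_sym => /negbTE ->.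
by rewrite mul0r.
Qed.

Lemma mulX f : mxop f *m Xm = mxop (fun s u => f s (flip u)).
Proof.
rewrite mxop_mul; apply: mxop_ext => s u.
under eq_bigr => t _ do rewrite eq_sym (can2_eq flipK flipK).
by rewrite sum_pickr.
Qed.
Lemma Xmul f : Xm *m mxop f = mxop (fun s u => f (flip s) u).
Proof.
rewrite mxop_mul; apply: mxop_ext => s u.
under eq_bigr => t _ do rewrite eq_sym.
by rewrite sum_pickl.
Qed.
Lemma mulZ f : mxop f *m Zm = mxop (fun s u => f s u * dd u).
Proof.
rewrite mxop_mul; apply: mxop_ext => s u.
under eq_bigr => t _ do rewrite mulrA.
rewrite (bigD1 u) //= eqxx mulr1 big1 ?addr0 // => t /negbTE ->.
by rewrite mulr0 mul0r.
Qed.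
Lemma Zmul f : Zm *m mxop f = mxop (fun s u => dd s * f s u).
Proof.
rewrite mxop_mul; apply: mxop_ext => s u.
rewrite (bigD1 s) //= eqxx mul1r big1 ?addr0 // => t; rewrite eq_sym => /negbTE ->.
by rewrite !mul0r.
Qed.

Definition Comm (M : op n) := M *m Xm = Xm *m M /\ M *m Zm = Zm *m M.

Lemma Comm_alg G : (forall M, G M -> Comm M) -> forall M, gen_alg G M -> Comm M.
Proof.
move=> HG M; elim => {M} [M /HG //| | M N _ [h1 h2] _ [h3 h4]
  | c M _ [h1 h2] | M N _ [h1 h2] _ [h3 h4]].
- by split; rewrite mul1mx mulmx1.
- by split; rewrite mulmxDl mulmxDr ?h1 ?h2 ?h3 ?h4.
- by split; rewrite -scalemxAl -scalemxAr ?h1 ?h2.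
- by split; rewrite -mulmxA ?h3 ?h4 !mulmxA ?h1 ?h2.
Qed.

Lemma bell_flip (a : 'I_4) x y x' y' :
  bell a (~~ x) (~~ y) * (bell a (~~ x') (~~ y'))^* = bell a x y * (bell a x' y')^*.
Proof.
case: a => [[|[|[|[|m]]]] Hm] //; case: x; case: y; case: x'; case: y';
  rewrite /bell /= ?rmorphN ?conjC1 ?conjC0 ?mulrN ?mulNr ?opprK ?mulr0 ?mul0r ?rmorph1 ?rmorph0 ?oppr0 ?mulr1 //.
Qed.

Lemma bell_par (a : 'I_4) x y x' y' :
  (x == y) != (x' == y') -> bell a x y * (bell a x' y')^* = 0.
Proof.
case: a => [[|[|[|[|m]]]] Hm] //; case: x; case: y; case: x'; case: y';
  rewrite /bell /= ?rmorphN ?conjC1 ?conjC0 ?mulrN ?mulNr ?opprK ?mulr0 ?mul0r ?rmorph1 ?rmorph0 ?oppr0 ?mulr1 //.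
Qed.

Lemma agree_flip (P : pred (qubit n)) s u :
  agree_off P (flip s) (flip u) = agree_off P s u.
Proof.
rewrite /agree_off; apply: eq_forallb => q; rewrite !ffunE.
by case: (s q); case: (u q).
Qed.

Lemma commX_of f : (forall s u, f (flip s) (flip u) = f s u) ->
  mxop f *m Xm = Xm *m mxop f.
Proof.
move=> H; rewrite mulX Xmul; apply: mxop_ext => s u.
by rewrite -[RHS]H flipK.
Qed.

Lemma commZ_of f : (forall s u, f s u * dd u = dd s * f s u) ->
  mxop f *m Zm = Zm *m mxop f.
Proof. by move=> H; rewrite mulZ Zmul; apply: mxop_ext. Qed.

Lemma dd_split (a b : qubit n) s : a != b ->
  dd s = sg (s a) * sg (s b) * \prod_(q | (q != a) && (q != b)) sg (s q).
Proof.
move=> ab; rewrite /dd (bigD1 a) //= (bigD1 b) 1?eq_sym //= mulrA.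
by congr (_ * _); apply: eq_bigl => q; rewrite andbC.
Qed.

Lemma sg2 (x y x' y' : bool) : (x == y) = (x' == y') -> sg x * sg y = sg x' * sg y'.
Proof. by case: x; case: y; case: x'; case: y' => /= h; rewrite /sg ?mulrNN ?mulr1 ?mul1r. Qed.

Lemma Eproj_comm (i j : 'I_n) (a : 'I_4) : Comm (Eproj i j a).
Proof.
split.
  apply: commX_of => s u; rewrite !ffunE agree_flip bell_flip //.
apply: commZ_of => s u.
set P := (fun q : qubit n => (q == (false, i)) || (q == (true, j))).
case Ha: (agree_off P s u); last by rewrite !mulr0 mul0r.
have ab : (false, i) != (true, j) :> qubit n by [].
case Hp: ((s (false, i) == s (true, j)) == (u (false, i) == u (true, j))).
  rewrite mulrC; congr (_ * _).
  rewrite (dd_split s ab) (dd_split u ab); congr (_ * _).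
    by apply: sg2; move/eqP: Hp => ->.
  apply: eq_bigr => q /andP [q1 q2].
  by move/forallP: Ha => /(_ q) /implyP; rewrite /P (negbTE q1) (negbTE q2) => /(_ isT) /eqP ->.
by rewrite bell_par ?Hp // !mul0r mulr0.
Qed.

Section Loc.
Variable q : qubit n.
Definition s0 (x : bool) : basis n := [ffun r => if r == q then x else false].

Lemma agree_s0 x y : agree_off (pred1 q) (s0 x) (s0 y).
Proof. by apply/forallP => r; apply/implyP => /= hr; rewrite !ffunE (negbTE hr). Qed.

Lemma dd_s0 y : dd (s0 y) = sg y.
Proof.
rewrite /dd (bigD1 q) //= ffunE eqxx big1 ?mulr1 // => r hr.
by rewrite ffunE (negbTE hr).
Qed.

Lemma cc0 (c : algC) : c = - c -> c = 0.
Proof.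
move=> h; apply/eqP; have: c *+ 2 == 0 by rewrite mulr2n {1}h addNr.
by rewrite mulrn_eq0.
Qed.

Lemma ordb (k : 'I_2) : k = b2o (val k == 1%N).
Proof. by case: k => [[|[|m]] Hk] //; apply/val_inj; rewrite /= /b2o inordK. Qed.

Lemma b2o_inj : injective b2o.
Proof. by case; case => // h; have := congr1 val h; rewrite /= /b2o !inordK. Qed.

Lemma scalar_of_comm (A : 'M[algC]_2) : Comm (local q A) -> exists c, A = c%:M.
Proof.
move=> [hX hZ].
rewrite /local mulX Xmul in hX; rewrite /local mulZ Zmul in hZ.
have eX x y : A (b2o x) (b2o y) = A (b2o (~~ x)) (b2o (~~ y)).
  have := mxop_inj hX (s0 x) (flip (s0 y)).
  by rewrite flipK agree_flip agree_s0 /flip !ffunE eqxx (_ : true%:R = 1 :> algC) // !mulr1.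

have eZ x : A (b2o x) (b2o (~~ x)) = 0.
  have := mxop_inj hZ (s0 x) (s0 (~~ x)).
  rewrite agree_s0 !dd_s0 !ffunE eqxx (_ : true%:R = 1 :> algC) // !mulr1.
  by case: x; rewrite /sg ?mulrN1 ?mulr1 ?mulN1r ?mul1r => h; apply: cc0.
exists (A (b2o false) (b2o false)); apply/matrixP => k l.
have [x ->] : exists x, k = b2o x by exists (val k == 1%N); exact: ordb.
have [y ->] : exists y, l = b2o y by exists (val l == 1%N); exact: ordb.
rewrite mxE (inj_eq b2o_inj).
case: x; case: y => /=; rewrite ?mulr1n ?mulr0n //.
Qed.
End Loc.
End S.

Theorem lemma4 (n : nat) (hn : (1 <= n)%N) :
  ~ (exists (q : qubit n) (A : 'M[algC]_2),
       Dalg (local q A) /\ ~ (exists c : algC, A = c%:M)).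
Proof.
move=> [q [A [hD hA]]]; apply: hA; apply: scalar_of_comm.
apply: (Comm_alg _ hD) => M [i [j [a ->]]]; exact: Eproj_comm.
Qed.
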